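(* For every $q>1$, the sketch $q$-$\mathsf{LL}$ is weakly scale-invariant with base $q$, and $\mathcal{H}(q\text{-}\mathsf{LL})=\phi(q)/\ln q$ and $\mathcal{I}(q\text{-}\mathsf{LL})=\rho(q)/\ln q$.
   Context: A sketch is described by its induced distribution family: for each cardinality $\lambda>0$, a distribution $\psi_\lambda$ on a countable state space; $X_\lambda\sim\psi_\lambda$. Entropy $H(X_\lambda)=-\sum_x\psi_\lambda(x)\log_2\psi_\lambda(x)$, Fisher information $I(\lambda)=\sum_x(\frac{\partial}{\partial\lambda}\psi_\lambda(x))^2/\psi_\lambda(x)$. Weakly scale-invariant with base $q>1$ means: for all $\lambda>0$, $H(X_\lambda)=H(X_{q\lambda})$ and $I(\lambda)=q^2I(q\lambda)$. Then $\mathcal{H}=\int_0^1H(X_{q^r})\,dr$ and $\mathcal{I}=\int_0^1 q^{2r}I(q^r)\,dr$. The sketch $q$-$\mathsf{LL}$ has state space $\mathbb Z$ and $\psi_\lambda(k)=e^{-\lambda/q^k}-e^{-\lambda/q^{k-1}}$. $\phi(q)=\int_{-\infty}^\infty -\big(e^{-e^r}-e^{-qe^r}\big)\log_2\big(e^{-e^r}-e^{-qe^r}\big)\,dr$, $\rho(q)=\int_{-\infty}^\infty \frac{\left(-e^re^{-e^r}+qe^re^{-qe^r}\right)^2}{e^{-e^r}-e^{-qe^r}}\,dr$. *)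

(* Defs.v *)
From Stdlib Require Import Reals ZArith.
From Coquelicot Require Import Coquelicot.
Open Scope R_scope.

(* A distribution family on state space Z: psi lambda k *)
Definition family := R -> Z -> R.

Definition ex_seriesZ (f : Z -> R) : Prop :=
  ex_series (fun n : nat => f (Z.of_nat n)) /\
  ex_series (fun n : nat => f (- (Z.of_nat n + 1))%Z).

Definition SeriesZ (f : Z -> R) : R :=
  Series (fun n : nat => f (Z.of_nat n)) +
  Series (fun n : nat => f (- (Z.of_nat n + 1))%Z).

Definition log2 (x : R) : R := ln x / ln 2.

Definition entropy_term (psi : family) (l : R) (x : Z) : R :=
  - (psi l x * log2 (psi l x)).
Definition entropy (psi : family) (l : R) : R := SeriesZ (entropy_term psi l).

Definition fisher_term (psi : family) (l : R) (x : Z) : R :=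
  (Derive (fun m => psi m x) l) ^ 2 / psi l x.
Definition fisher (psi : family) (l : R) : R := SeriesZ (fisher_term psi l).

Definition weakly_scale_invariant (psi : family) (q : R) : Prop :=
  forall l, 0 < l ->
    entropy psi l = entropy psi (q * l) /\
    fisher psi l = q ^ 2 * fisher psi (q * l).

Definition calH (psi : family) (q : R) : R :=
  RInt (fun r => entropy psi (Rpower q r)) 0 1.
Definition calI (psi : family) (q : R) : R :=
  RInt (fun r => Rpower q (2 * r) * fisher psi (Rpower q r)) 0 1.

Definition qLL (q : R) : family :=
  fun l k => exp (- l / powerRZ q k) - exp (- l / powerRZ q (k - 1)).

Definition phi_integrand (q r : R) : R :=
  - ((exp (- exp r) - exp (- (q * exp r))) *
     log2 (exp (- exp r) - exp (- (q * exp r)))).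
Definition rho_integrand (q r : R) : R :=
  (- (exp r * exp (- exp r)) + q * exp r * exp (- (q * exp r))) ^ 2 /
  (exp (- exp r) - exp (- (q * exp r))).

Definition phi (q : R) : R :=
  RInt_gen (phi_integrand q) (Rbar_locally m_infty) (Rbar_locally p_infty).
Definition rho (q : R) : R :=
  RInt_gen (rho_integrand q) (Rbar_locally m_infty) (Rbar_locally p_infty).

(* Main.v *)
Require Import Defs.
From Stdlib Require Import Reals Lra Lia ZArith.
From Coquelicot Require Import Coquelicot.
Open Scope R_scope.

Definition good (F : R -> R) (C : R) :=
  (forall t, continuous F t) /\ (forall t, 0 <= F t <= C * exp (- Rabs t / 2)).

Definition TS (F : R -> R) (L x : R) : R :=
  Series (fun n => F (x - INR n * L)) + Series (fun n => F (x + (INR n + 1) * L)).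

Lemma exp_INR_mult (n : nat) (y : R) : exp (INR n * y) = exp y ^ n.
Proof.
  induction n as [|n IH].
  - simpl; rewrite Rmult_0_l, exp_0; reflexivity.
  - rewrite S_INR, Rmult_plus_distr_r, Rmult_1_l, exp_plus, IH; simpl; ring.
Qed.

Lemma exp_le_exp x y : x <= y -> exp x <= exp y.
Proof. intros [h|h]; [left; apply exp_increasing; auto | subst; lra]. Qed.

Lemma exp_lt1 x : x < 0 -> exp x < 1.
Proof. intros; rewrite <- exp_0; apply exp_increasing; auto. Qed.
Lemma exp_le1 x : x <= 0 -> exp x <= 1.
Proof. intros; rewrite <- exp_0; apply exp_le_exp; auto. Qed.
Lemma exp_ge1 x : 0 <= x -> 1 <= exp x.
Proof. intros; rewrite <- exp_0; apply exp_le_exp; auto. Qed.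
Lemma exp_inv1 x y : x + y = 0 -> exp x * exp y = 1.
Proof. intros H; rewrite <- exp_plus, H; apply exp_0. Qed.

Lemma rho_bounds (L : R) : 0 < L -> 0 < exp (- L / 2) < 1.
Proof.
  intros HL; split; [apply exp_pos|].
  rewrite <- exp_0; apply exp_increasing; lra.
Qed.

Lemma good_C (F : R -> R) C : good F C -> 0 <= C.
Proof.
  intros [_ H]. destruct (H 0) as [H1 H2].
  pose proof (exp_pos (- Rabs 0 / 2)).
  destruct (Rle_or_lt 0 C) as [h|h]; auto.
  assert (C * exp (- Rabs 0 / 2) < 0) by (apply Rmult_neg_pos; auto). lra.
Qed.

Lemma bnd_gen (F : R -> R) C L x t (n : nat) : 0 < L -> good F C ->
  INR n * L - Rabs x <= Rabs t ->
  F t <= C * exp (Rabs x / 2) * exp (- L / 2) ^ n.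
Proof.
  intros HL HF Ht. pose proof (good_C F C HF) as HC.
  destruct HF as [_ HF]. destruct (HF t) as [_ H].
  eapply Rle_trans; [apply H|].
  rewrite Rmult_assoc. apply Rmult_le_compat_l; auto.
  rewrite <- exp_INR_mult, <- exp_plus. apply exp_le_exp.
  assert (INR n * (- L / 2) = - (INR n * L) / 2) by field. lra.
Qed.

Lemma bnd_neg (F : R -> R) C L x (n : nat) : 0 < L -> good F C ->
  F (x - INR n * L) <= C * exp (Rabs x / 2) * exp (- L / 2) ^ n.
Proof.
  intros HL HF. apply bnd_gen; auto.
  pose proof (pos_INR n). assert (0 <= INR n * L) by nra.
  set (m := INR n * L) in *. unfold Rabs; destruct Rcase_abs; destruct Rcase_abs; lra.
Qed.

Lemma bnd_pos (F : R -> R) C L x (n : nat) : 0 < L -> good F C ->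
  F (x + (INR n + 1) * L) <= C * exp (Rabs x / 2) * exp (- L / 2) ^ n.
Proof.
  intros HL HF. apply bnd_gen; auto.
  pose proof (pos_INR n). assert (0 <= INR n * L) by nra.
  replace ((INR n + 1) * L) with (INR n * L + L) by ring.
  set (m := INR n * L) in *. unfold Rabs; destruct Rcase_abs; destruct Rcase_abs; lra.
Qed.

Lemma ex_series_bnd (a : nat -> R) K r : 0 < r < 1 ->
  (forall n, 0 <= a n <= K * r ^ n) -> ex_series a.
Proof.
  intros Hr Ha. apply (ex_series_le a (fun n => K * r ^ n)).
  - intros n. destruct (Ha n). change (norm (a n)) with (Rabs (a n)).
    rewrite Rabs_pos_eq; lra.
  - apply (ex_series_scal_l K (fun n => r ^ n)). apply ex_series_geom.
    rewrite Rabs_pos_eq; lra.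
Qed.

Lemma ex_neg (F : R -> R) C L x : 0 < L -> good F C ->
  ex_series (fun n => F (x - INR n * L)).
Proof.
  intros HL HF. apply (ex_series_bnd _ (C * exp (Rabs x / 2)) (exp (-L/2))).
  apply rho_bounds; auto.
  intros n; split; [apply HF | apply bnd_neg; auto].
Qed.

Lemma ex_pos (F : R -> R) C L x : 0 < L -> good F C ->
  ex_series (fun n => F (x + (INR n + 1) * L)).
Proof.
  intros HL HF. apply (ex_series_bnd _ (C * exp (Rabs x / 2)) (exp (-L/2))).
  apply rho_bounds; auto.
  intros n; split; [apply HF | apply bnd_pos; auto].
Qed.

Lemma TS_shift (F : R -> R) C L x : 0 < L -> good F C -> TS F L (x + L) = TS F L x.
Proof.
  intros HL HF. unfold TS.
  rewrite (Series_incr_1 (fun n => F (x + L - INR n * L))) by (apply (ex_neg F C); auto).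
  rewrite (Series_incr_1 (fun n => F (x + (INR n + 1) * L)) (ex_pos F C L x HL HF)).
  rewrite (Series_ext (fun k => F (x + L - INR (S k) * L)) (fun n => F (x - INR n * L))).
  rewrite (Series_ext (fun k => F (x + (INR (S k) + 1) * L)) (fun n => F (x + L + (INR n + 1) * L))).
  simpl INR. replace (x + L - 0 * L) with (x + (0 + 1) * L) by ring. ring.
  - intros n; rewrite S_INR; f_equal; ring.
  - intros n; rewrite S_INR; f_equal; ring.
Qed.

Ltac toR := match goal with |- ?a = ?b => change (@eq R a b) end.

Lemma scalR (a b : R) : scal a b = a * b.
Proof. reflexivity. Qed.

Lemma exRF (F : R -> R) C a b : good F C -> ex_RInt F a b.
Proof. intros [Hc _]. apply (@ex_RInt_continuous R_CompleteNormedModule); intros; apply Hc. Qed.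

Lemma is_RInt_lin (F : R -> R) C L c : 0 < L -> good F C ->
  is_RInt (fun r => F (r * L + c)) 0 1 (RInt F c (L + c) / L).
Proof.
  intros HL HF.
  assert (H1 : is_RInt F (L * 0 + c) (L * 1 + c) (RInt F c (L + c))).
  { replace (L * 0 + c) with c by ring. replace (L * 1 + c) with (L + c) by ring.
    apply (@RInt_correct R_CompleteNormedModule). apply (exRF F C); auto. }
  apply is_RInt_comp_lin in H1.
  apply (is_RInt_scal _ _ _ (/ L)) in H1.
  unfold Rdiv. rewrite Rmult_comm.
  eapply is_RInt_ext; [|exact H1].
  intros x _. rewrite !scalR. rewrite <- Rmult_assoc, Rinv_l by lra.
  rewrite Rmult_1_l. f_equal; ring.
Qed.

Definition Gn (F : R -> R) L (n : nat) r :=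
  sum_f_R0 (fun k => F (r * L - INR k * L)) n + sum_f_R0 (fun k => F (r * L + (INR k + 1) * L)) n.
Definition W (F : R -> R) L (n : nat) := RInt F (- INR n * L) ((INR n + 2) * L).

Lemma is_RInt_Gn (F : R -> R) C L n : 0 < L -> good F C ->
  is_RInt (Gn F L n) 0 1 (W F L n / L).
Proof.
  intros HL HF. induction n as [|n IH].
  - unfold Gn, W; simpl sum_f_R0.
    assert (H1 := is_RInt_lin F C L 0 HL HF).
    assert (H2 := is_RInt_lin F C L L HL HF).
    assert (H3 := is_RInt_plus _ _ _ _ _ _ H1 H2).
    eapply is_RInt_ext; [|replace (RInt F (- INR 0 * L) ((INR 0 + 2) * L) / L) with
      (plus (RInt F 0 (L + 0) / L) (RInt F L (L + L) / L)); [exact H3|]].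
    + intros x _. change (plus ?a ?b) with (a + b). simpl. f_equal; apply f_equal; ring.
    + change (plus ?a ?b) with (a + b). simpl INR.
      replace (L + 0) with L by ring. replace (- 0 * L) with 0 by ring.
      replace ((0 + 2) * L) with (L + L) by ring.
      rewrite <- (@RInt_Chasles R_CompleteNormedModule F 0 L (L + L)) by (apply (exRF F C); auto).
      change (plus ?a ?b) with (a + b). unfold Rdiv; symmetry; apply Rmult_plus_distr_r.
  - assert (H1 := is_RInt_lin F C L (- (INR n + 1) * L) HL HF).
    assert (H2 := is_RInt_lin F C L ((INR n + 2) * L) HL HF).
    assert (H3 := is_RInt_plus _ _ _ _ _ _ (is_RInt_plus _ _ _ _ _ _ IH H1) H2).
    eapply is_RInt_ext; [|replace (W F L (S n) / L) with
      (plus (plus (W F L n / L) (RInt F (- (INR n + 1) * L) (L + - (INR n + 1) * L) / L))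
          (RInt F ((INR n + 2) * L) (L + (INR n + 2) * L) / L)); [exact H3|]].
    + intros x _. unfold Gn. rewrite !tech5. rewrite !S_INR. change (plus ?a ?b) with (a + b).
      replace (x * L + - (INR n + 1) * L) with (x * L - (INR n + 1) * L) by ring.
      replace (x * L + (INR n + 2) * L) with (x * L + (INR n + 1 + 1) * L) by ring. toR. unfold plus; simpl. ring.
    + change (plus ?a ?b) with (a + b). unfold W. rewrite S_INR.
      replace (L + - (INR n + 1) * L) with (- INR n * L) by ring.
      replace (L + (INR n + 2) * L) with ((INR n + 1 + 2) * L) by ring.
      replace (- (INR n + 1) * L) with (- (INR n + 1) * L) by ring.
      rewrite <- (@RInt_Chasles R_CompleteNormedModule F (- (INR n + 1) * L) (- INR n * L) ((INR n + 1 + 2) * L)) by (apply (exRF F C); auto).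
      rewrite <- (@RInt_Chasles R_CompleteNormedModule F (- INR n * L) ((INR n + 2) * L) ((INR n + 1 + 2) * L)) by (apply (exRF F C); auto).
      change (plus ?a ?b) with (a + b). toR. unfold plus; simpl. field. lra.
Qed.

Lemma W_incr (F : R -> R) C L n : 0 < L -> good F C -> W F L n <= W F L (S n).
Proof.
  intros HL HF. unfold W. rewrite S_INR. pose proof (pos_INR n).
  rewrite <- (@RInt_Chasles R_CompleteNormedModule F (- (INR n + 1) * L) (- INR n * L) ((INR n + 1 + 2) * L)) by (apply (exRF F C); auto).
  rewrite <- (@RInt_Chasles R_CompleteNormedModule F (- INR n * L) ((INR n + 2) * L) ((INR n + 1 + 2) * L)) by (apply (exRF F C); auto).
  unfold plus; simpl.
  assert (0 <= RInt F (- (INR n + 1) * L) (- INR n * L)).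
  { apply RInt_ge_0; [nra | apply (exRF F C); auto | intros; apply HF]. }
  assert (0 <= RInt F ((INR n + 2) * L) ((INR n + 1 + 2) * L)).
  { apply RInt_ge_0; [nra | apply (exRF F C); auto | intros; apply HF]. }
  lra.
Qed.

Lemma Series_nonneg (a : nat -> R) : ex_series a -> (forall n, 0 <= a n) -> 0 <= Series a.
Proof.
  intros He Ha.
  assert (E : Series (fun n => 0 * a n) = 0) by (rewrite Series_scal_l; ring).
  rewrite <- E. apply Series_le; auto. intros n; rewrite Rmult_0_l; split; [lra|auto].
Qed.

Lemma tail_bound (a : nat -> R) K r n : 0 < r < 1 -> (forall m, 0 <= a m <= K * r ^ m) ->
  0 <= Series a - sum_f_R0 a n <= K * r ^ (S n) / (1 - r).
Proof.
  intros Hr Ha. assert (He : ex_series a) by (apply (ex_series_bnd a K r); auto).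
  rewrite (Series_incr_n a (S n)) by (auto with arith).
  simpl pred.
  assert (He2 : ex_series (fun k => a (S n + k)%nat)).
  { apply (ex_series_bnd _ (K * r ^ (S n)) r); auto. intros m; split; [apply Ha|].
    rewrite Rmult_assoc, <- pow_add. apply Ha. }
  split.
  - assert (0 <= Series (fun k => a (S n + k)%nat)) by (apply Series_nonneg; auto; intros; apply Ha). lra.
  - assert (Series (fun k => a (S n + k)%nat) <= Series (fun k => K * r ^ (S n) * r ^ k)).
    { apply Series_le.
      + intros m; split; [apply Ha|]. rewrite Rmult_assoc, <- pow_add. apply Ha.
      + apply (ex_series_scal_l (K * r ^ (S n)) (fun k => r ^ k)). apply ex_series_geom.
        rewrite Rabs_pos_eq; lra. }
    rewrite Series_scal_l, Series_geom in H by (rewrite Rabs_pos_eq; lra).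
    unfold Rdiv. lra.
Qed.

Definition clamp r := Rmin 1 (Rmax 0 r).
Lemma clamp_bounds r : 0 <= clamp r <= 1.
Proof. unfold clamp, Rmin, Rmax; repeat destruct Rle_dec; lra. Qed.
Lemma clamp_id r : 0 <= r <= 1 -> clamp r = r.
Proof. unfold clamp, Rmin, Rmax; repeat destruct Rle_dec; lra. Qed.

Lemma unif_conv (F : R -> R) C L (eps : R) : 0 < L -> good F C -> 0 < eps ->
  exists N, forall n, (N <= n)%nat -> forall r, 0 <= r <= 1 ->
    Rabs (Gn F L n r - TS F L (r * L)) < eps.
Proof.
  intros HL HF He. set (rho := exp (- L / 2)). assert (Hr : 0 < rho < 1) by apply rho_bounds, HL.
  pose proof (good_C F C HF) as HC.
  set (D := C * exp (L / 2)). assert (HD : 0 <= D) by (unfold D; pose proof (exp_pos (L/2)); nra).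
  set (y := eps * (1 - rho) / (2 * D + 1)).
  assert (Hy : 0 < y) by (unfold y; apply Rdiv_lt_0_compat; nra).
  destruct (pow_lt_1_zero rho ltac:(rewrite Rabs_pos_eq; lra) y Hy) as [N HN].
  exists N. intros n Hn r Hr01.
  assert (Hx : exp (Rabs (r * L) / 2) <= exp (L / 2)).
  { apply exp_le_exp. rewrite Rabs_pos_eq by nra. nra. }
  assert (B1 : forall m, 0 <= F (r * L - INR m * L) <= D * rho ^ m).
  { intros m; split; [apply HF|]. eapply Rle_trans; [apply (bnd_neg F C L (r*L) m HL HF)|].
    unfold D. apply Rmult_le_compat_r; [apply pow_le; lra|]. apply Rmult_le_compat_l; auto. }
  assert (B2 : forall m, 0 <= F (r * L + (INR m + 1) * L) <= D * rho ^ m).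
  { intros m; split; [apply HF|]. eapply Rle_trans; [apply (bnd_pos F C L (r*L) m HL HF)|].
    unfold D. apply Rmult_le_compat_r; [apply pow_le; lra|]. apply Rmult_le_compat_l; auto. }
  destruct (tail_bound _ D rho n Hr B1) as [T1 T2].
  destruct (tail_bound _ D rho n Hr B2) as [T3 T4].
  assert (HSn : Rabs (rho ^ S n) < y) by (apply HN; lia).
  rewrite Rabs_pos_eq in HSn by (apply pow_le; lra).
  assert (K1 : D * rho ^ S n / (1 - rho) <= D * y / (1 - rho)).
  { unfold Rdiv. apply Rmult_le_compat_r; [apply Rlt_le, Rinv_0_lt_compat; lra|]. nra. }
  assert (K2 : 2 * (D * y / (1 - rho)) < eps).
  { unfold y. replace (2 * (D * (eps * (1 - rho) / (2 * D + 1)) / (1 - rho))) with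
      (eps * (2 * D / (2 * D + 1))) by (field; lra).
    assert (2 * D / (2 * D + 1) < 1) by (apply (Rmult_lt_reg_r (2*D+1)); [lra|]; unfold Rdiv; rewrite Rmult_assoc, Rinv_l by lra; lra). nra. }
  unfold Gn, TS. rewrite Rabs_minus_sym.
  rewrite Rabs_pos_eq; lra.
Qed.

Lemma main_gen (F : R -> R) C L : 0 < L -> good F C ->
  ex_RInt (fun r => TS F L (r * L)) 0 1 /\
  ex_RInt_gen F (Rbar_locally m_infty) (Rbar_locally p_infty) /\
  RInt (fun r => TS F L (r * L)) 0 1 = RInt_gen F (Rbar_locally m_infty) (Rbar_locally p_infty) / L.
Proof.
  intros HL HF.
  set (fn := fun (n : nat) r => Gn F L n (clamp r)).
  set (lf := fun r => TS F L (clamp r * L)).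
  assert (Hint : forall n, is_RInt (fn n) 0 1 (W F L n / L)).
  { intros n. eapply is_RInt_ext; [|apply (is_RInt_Gn F C L n HL HF)].
    intros x Hx. rewrite Rmin_left, Rmax_right in Hx by lra.
    unfold fn. rewrite clamp_id by lra. reflexivity. }
  assert (Hunif : filterlim fn eventually (@locally (fct_UniformSpace R R_UniformSpace) lf)).
  { apply filterlim_locally. intros eps.
    destruct (unif_conv F C L eps HL HF (cond_pos eps)) as [N HN].
    exists N. intros n Hn t. unfold fn, lf.
    change (Rabs (Gn F L n (clamp t) - TS F L (clamp t * L)) < eps).
    apply HN; auto. apply clamp_bounds. }
  destruct (@filterlim_RInt nat R_CompleteNormedModule fn 0 1 eventually eventually_filter lf
    (fun n => W F L n / L) Hint Hunif) as [J [HJ HlfJ]].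
  assert (HTS : is_RInt (fun r => TS F L (r * L)) 0 1 J).
  { eapply is_RInt_ext; [|exact HlfJ]. intros x Hx. rewrite Rmin_left, Rmax_right in Hx by lra.
    unfold lf. rewrite clamp_id by lra. reflexivity. }
  assert (Hle : forall n, W F L n <= L * J).
  { intros n. assert (W F L n / L <= J).
    { apply (is_lim_seq_incr_compare (fun n => W F L n / L)); [exact HJ|].
      intros m. unfold Rdiv. apply Rmult_le_compat_r; [apply Rlt_le, Rinv_0_lt_compat; auto|].
      apply (W_incr F C); auto. }
    unfold Rdiv in H. apply (Rmult_le_compat_l L) in H; [|lra].
    rewrite <- Rmult_assoc, (Rmult_comm L), Rmult_assoc, Rinv_r, Rmult_1_r in H by lra. exact H. }
  assert (Hgen : is_RInt_gen F (Rbar_locally m_infty) (Rbar_locally p_infty) (L * J)).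
  { intros P [eps HP].
    assert (HJ' := proj1 (filterlim_locally _ _) HJ (mkposreal (eps / L) ltac:(apply Rdiv_lt_0_compat; [apply cond_pos|auto]))).
    destruct HJ' as [N HN]. specialize (HN N (le_n N)).
    change (Rabs (W F L N / L - J) < eps / L) in HN.
    assert (HWN : L * J - W F L N < eps).
    { apply Rabs_lt_between in HN. destruct HN as [HN _].
      apply (Rmult_lt_compat_l L) in HN; [|lra].
      replace (L * (- (eps / L))) with (- eps) in HN by (field; lra).
      replace (L * (W F L N / L - J)) with (W F L N - L * J) in HN by (field; lra). lra. }
    pose proof (pos_INR N).
    apply (Filter_prod _ _ _ (fun a => a < - INR N * L) (fun b => (INR N + 2) * L < b)).
    - exists (- INR N * L). auto.
    - exists ((INR N + 2) * L). auto.
    - intros a b Ha Hb. exists (RInt F a b). split.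
      + apply (@RInt_correct R_CompleteNormedModule). apply (exRF F C); auto.
      + apply HP. change (Rabs (RInt F a b - L * J) < eps).
        assert (Low : W F L N <= RInt F a b).
        { unfold W. rewrite <- (@RInt_Chasles R_CompleteNormedModule F a (- INR N * L) b) by (apply (exRF F C); auto).
          rewrite <- (@RInt_Chasles R_CompleteNormedModule F (- INR N * L) ((INR N + 2) * L) b) by (apply (exRF F C); auto).
          unfold plus; simpl.
          assert (0 <= RInt F a (- INR N * L)).
          { apply RInt_ge_0; [lra | apply (exRF F C); auto | intros; apply HF]. }
          assert (0 <= RInt F ((INR N + 2) * L) b).
          { apply RInt_ge_0; [lra | apply (exRF F C); auto | intros; apply HF]. }
          lra. }
        destruct (INR_unbounded ((Rabs a + Rabs b) / L)) as [M HM].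
        assert (HML : INR M * L > Rabs a + Rabs b).
        { apply (Rmult_lt_compat_r L) in HM; auto. unfold Rdiv in HM.
          rewrite Rmult_assoc, Rinv_l, Rmult_1_r in HM by lra. lra. }
        assert (Up : RInt F a b <= W F L M).
        { unfold W. rewrite <- (@RInt_Chasles R_CompleteNormedModule F (- INR M * L) a ((INR M + 2) * L)) by (apply (exRF F C); auto).
          rewrite <- (@RInt_Chasles R_CompleteNormedModule F a b ((INR M + 2) * L)) by (apply (exRF F C); auto).
          unfold plus; simpl.
          pose proof (Rle_abs a). pose proof (Rle_abs b). pose proof (Rabs_pos a). pose proof (Rabs_pos b).
          pose proof (Rabs_maj2 a).
          assert (0 <= RInt F (- INR M * L) a).
          { apply RInt_ge_0; [lra | apply (exRF F C); auto | intros; apply HF]. }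
          assert (0 <= RInt F b ((INR M + 2) * L)).
          { apply RInt_ge_0; [lra | apply (exRF F C); auto | intros; apply HF]. }
          lra. }
        specialize (Hle M). rewrite Rabs_minus_sym, Rabs_pos_eq; lra. }
  assert (HRg : RInt_gen F (Rbar_locally m_infty) (Rbar_locally p_infty) = L * J).
  { refine (@is_RInt_gen_unique R_CompleteNormedModule _ _ _ _ F _ Hgen). }
  split; [exists J; exact HTS|]. split; [exists (L * J); exact Hgen|].
  rewrite HRg. rewrite (is_RInt_unique _ _ _ _ HTS). assert (E : forall x : R, x = L * x / L) by (intros; field; lra). apply E.
Qed.

Definition gq (q t : R) := exp (- exp t) - exp (- (q * exp t)).

Lemma gq_facts q t : 1 < q ->
  0 < gq q t /\ gq q t < 1 /\ gq q t <= exp (- exp t) /\ gq q t <= q * exp t.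
Proof.
  intros Hq. unfold gq. pose proof (exp_pos t) as Ha. set (a := exp t) in *.
  assert (H1 : exp (- (q * a)) < exp (- a)) by (apply exp_increasing; nra).
  assert (H2 : exp (- a) < 1) by (rewrite <- exp_0; apply exp_increasing; lra).
  pose proof (exp_pos (- (q * a))). pose proof (exp_ineq1_le (- (q * a))).
  repeat split; lra.
Qed.

Lemma phi_eq q t : phi_integrand q t = - (gq q t * (ln (gq q t) / ln 2)).
Proof. reflexivity. Qed.

Lemma ln2_pos : 0 < ln 2.
Proof. rewrite <- ln_1. apply ln_increasing; lra. Qed.

Lemma phi_good q : 1 < q -> good (phi_integrand q) (2 * exp (ln q / 2) / ln 2).
Proof.
  intros Hq. pose proof ln2_pos as Hl2.
  assert (HL : 0 < ln q) by (rewrite <- ln_1; apply ln_increasing; lra).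
  split.
  - intros t. apply (@ex_derive_continuous R_AbsRing R_NormedModule). destruct (gq_facts q t Hq) as [Hg _].
    unfold phi_integrand, log2. auto_derive. unfold gq in Hg. repeat split; auto; lra.
  - intros t. destruct (gq_facts q t Hq) as [Hg0 [Hg1 [Hg2 Hg3]]].
    rewrite phi_eq. set (g := gq q t) in *.
    assert (Hs : ln g < 0) by (rewrite <- ln_1; apply ln_increasing; lra).
    set (s := ln g) in *.
    assert (Eg : g = exp s) by (unfold s; rewrite exp_ln; auto).
    assert (E1 : - (g * (s / ln 2)) = (- s * exp s) / ln 2) by (rewrite <- Eg; field; lra).
    rewrite E1. split.
    + apply Rdiv_le_0_compat; auto. pose proof (exp_pos s). nra.
    + assert (K1 : - s * exp s <= 2 * exp (s / 2)).
      { pose proof (exp_ineq1_le (- s / 2)).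
        assert (exp s = exp (s / 2) * exp (s / 2)) by (rewrite <- !exp_plus; f_equal; field).
        pose proof (exp_pos (s/2)). pose proof (exp_pos (-s/2)).
        assert (- s * exp s = 2 * (- s / 2) * exp (s/2) * exp (s/2)) by (rewrite H0; field).
        assert (- s / 2 * exp (s/2) <= exp (- s / 2) * exp (s/2)) by nra.
        assert (exp (- s / 2) * exp (s / 2) = 1) by (rewrite <- exp_plus, <- exp_0; f_equal; field).
        nra. }
      assert (K2 : exp (s / 2) <= exp (ln q / 2) * exp (- Rabs t / 2)).
      { rewrite <- exp_plus. apply exp_le_exp. destruct (Rle_or_lt t 0) as [ht|ht].
        - rewrite Rabs_left1 by auto.
          assert (s <= ln q + t).
          { unfold s. replace (ln q + t) with (ln (q * exp t)).
            - apply ln_le; auto.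
            - rewrite ln_mult, ln_exp; auto; try lra; apply exp_pos. }
          lra.
        - rewrite Rabs_right by lra.
          assert (s <= - exp t) by (unfold s; rewrite <- (ln_exp (- exp t)); apply ln_le; auto).
          pose proof (exp_ineq1_le t). lra. }
      replace (2 * exp (ln q / 2) / ln 2 * exp (- Rabs t / 2)) with
        ((2 * (exp (ln q / 2) * exp (- Rabs t / 2))) / ln 2) by (field; lra).
      unfold Rdiv. apply Rmult_le_compat_r; [apply Rlt_le, Rinv_0_lt_compat; auto|]. nra.
Qed.

Lemma key_ineq q a W : 1 < q -> 0 < a -> 0 < W < 1 -> W * (1 + (q - 1) * a) <= 1 ->
  a ^ 2 * (1 - q * W) ^ 2 <= 2 * q ^ 2 * (a + a ^ 2) * (1 - W).
Proof.
  intros Hq Ha HW H.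
  set (x := 1 - W). set (y := (q - 1) * W).
  assert (Hx : 0 < x <= 1) by (unfold x; lra).
  assert (Hy : 0 <= y) by (unfold y; nra).
  assert (Hxy : y * a <= x) by (unfold x, y; nra).
  assert (Hyq : y <= q * q) by (unfold y; nra).
  assert (Hqq : 1 <= q * q) by nra.
  replace (1 - q * W) with (x - y) by (unfold x, y; ring).
  assert (A1 : (x - y) * (x - y) <= 2 * (x * x) + 2 * (y * y))
    by (pose proof (Rle_0_sqr (x + y)); unfold Rsqr in *; nra).
  assert (Aa : 0 < a * a) by nra.
  assert (A2 : a * a * (x * x) <= q * q * (a * a) * x).
  { assert (x * x <= x) by nra. assert (a * a * (x * x) <= a * a * x) by nra.
    assert (0 <= a * a * x) by nra. nra. }
  assert (A3 : a * a * (y * y) <= q * q * a * x).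
  { assert (a * a * (y * y) <= a * a * y * (q * q)).
    { assert (0 <= a * a * y) by nra. nra. }
    assert (a * a * y <= a * x) by nra.
    assert (0 <= q * q) by nra. nra. }
  assert (a * a * ((x - y) * (x - y)) <= a * a * (2 * (x * x) + 2 * (y * y))) by nra.
  replace (a ^ 2 * (x - y) ^ 2) with (a * a * ((x - y) * (x - y))) by ring.
  replace (2 * q ^ 2 * (a + a ^ 2) * x) with (2 * (q * q * (a * a) * x) + 2 * (q * q * a * x)) by ring.
  lra.
Qed.

Lemma rho_good q : 1 < q -> good (rho_integrand q) (54 * q ^ 2).
Proof.
  intros Hq. split.
  - intros t. apply (@ex_derive_continuous R_AbsRing R_NormedModule).
    destruct (gq_facts q t Hq) as [Hg _]. unfold gq in Hg.
    unfold rho_integrand. auto_derive. lra.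
  - intros t. destruct (gq_facts q t Hq) as [Hg0 _].
    assert (Hr : rho_integrand q t =
      (- (exp t * exp (- exp t)) + q * exp t * exp (- (q * exp t))) ^ 2 / gq q t) by reflexivity.
    rewrite Hr. split.
    + unfold Rdiv. apply Rmult_le_pos; [apply pow2_ge_0|apply Rlt_le, Rinv_0_lt_compat; auto].
    + unfold gq in *. pose proof (exp_pos t) as Ha. set (a := exp t) in *.
      set (E := exp (- a)). set (W := exp (- ((q - 1) * a))).
      assert (HE : 0 < E) by apply exp_pos.
      assert (HEq : exp (- (q * a)) = E * W) by (unfold E, W; rewrite <- exp_plus; f_equal; ring).
      rewrite HEq in *.
      assert (HW0 : 0 < W) by apply exp_pos.
      assert (HW1 : W < 1) by (unfold W; apply exp_lt1; assert (0 < (q - 1) * a) by (apply Rmult_lt_0_compat; lra); lra).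
      assert (HW2 : W * (1 + (q - 1) * a) <= 1).
      { assert (W * exp ((q - 1) * a) = 1) by (unfold W; apply exp_inv1; ring).
        pose proof (exp_ineq1_le ((q - 1) * a)). nra. }
      assert (K := key_ineq q a W Hq Ha (conj HW0 HW1) HW2).
      assert (Hh : (- (a * E) + q * a * (E * W)) ^ 2 / (E - E * W) <= 2 * q ^ 2 * E * (a + a ^ 2)).
      { replace ((- (a * E) + q * a * (E * W)) ^ 2) with (E * E * (a ^ 2 * (1 - q * W) ^ 2)) by ring.
        replace (E - E * W) with (E * (1 - W)) by ring.
        apply (Rmult_le_reg_r (E * (1 - W))); [nra|].
        unfold Rdiv. rewrite Rmult_assoc, Rinv_l, Rmult_1_r by nra.
        assert (0 <= E * E) by nra. nra. }
      eapply Rle_trans; [exact Hh|].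
      destruct (Rle_or_lt t 0) as [ht|ht].
      * rewrite Rabs_left1 by auto.
        assert (a <= 1) by (unfold a; apply exp_le1; auto).
        assert (E <= 1) by (unfold E; apply exp_le1; lra).
        assert (a <= exp (- - t / 2)) by (unfold a; apply exp_le_exp; lra).
        assert (0 <= q ^ 2) by nra.
        assert (E * (a + a ^ 2) <= 2 * a) by nra.
        nra.
      * rewrite Rabs_right by lra.
        assert (Ha1 : 1 <= a) by (unfold a; apply exp_ge1; lra).
        assert (Hexp : exp a = exp (a / 3) * exp (a / 3) * exp (a / 3))
          by (rewrite <- !exp_plus; f_equal; field).
        pose proof (exp_ineq1_le (a / 3)).
        assert (Hc : (1 + a / 3) ^ 3 <= exp a).
        { rewrite Hexp. assert (0 <= 1 + a / 3) by lra.
          assert ((1 + a / 3) * (1 + a / 3) <= exp (a / 3) * exp (a / 3)) by nra.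
          assert (0 <= (1 + a / 3) * (1 + a / 3)) by nra. simpl. nra. }
        assert (HEa : E * exp a = 1) by (unfold E; apply exp_inv1; ring).
        assert (H27 : a * (E * (a + a ^ 2)) <= 27).
        { assert (a ^ 2 + a ^ 3 <= 27 * exp a) by nra.
          replace (a * (E * (a + a ^ 2))) with (E * (a ^ 2 + a ^ 3)) by ring.
          assert (E * (a ^ 2 + a ^ 3) <= E * (27 * exp a)) by nra. nra. }
        assert (Hinv : exp (- t) * a = 1) by (unfold a; apply exp_inv1; ring).
        assert (exp (- t) <= exp (- t / 2)) by (apply exp_le_exp; lra).
        assert (E * (a + a ^ 2) <= 27 * exp (- t)).
        { assert (0 < exp (-t)) by apply exp_pos.
          replace (E * (a + a ^ 2)) with (exp (- t) * (a * (E * (a + a ^ 2)))) by (rewrite <- (Rmult_assoc (exp (- t)) a), Hinv; ring).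
          nra. }
        assert (0 <= q ^ 2) by nra. nra.
Qed.

Lemma lnq_pos q : 1 < q -> 0 < ln q.
Proof. intros; rewrite <- ln_1; apply ln_increasing; lra. Qed.

Lemma div_powerRZ q l z : 1 < q -> 0 < l -> l / powerRZ q z = exp (ln l - IZR z * ln q).
Proof.
  intros Hq Hl. rewrite powerRZ_Rpower by lra. unfold Rpower.
  unfold Rminus. rewrite exp_plus, exp_ln by auto. rewrite exp_Ropp. reflexivity.
Qed.

Lemma qLL_eq q l k : 1 < q -> 0 < l ->
  qLL q l k = gq q (ln l - IZR k * ln q).
Proof.
  intros Hq Hl. unfold qLL, gq.
  assert (H1 : - l / powerRZ q k = - exp (ln l - IZR k * ln q)).
  { rewrite <- div_powerRZ by auto. unfold Rdiv. ring. }
  assert (H2 : - l / powerRZ q (k - 1) = - (q * exp (ln l - IZR k * ln q))).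
  { unfold Rdiv. rewrite Ropp_mult_distr_l_reverse. fold (l / powerRZ q (k - 1)).
    rewrite div_powerRZ by auto. rewrite minus_IZR.
    replace (ln l - (IZR k - 1) * ln q) with ((ln l - IZR k * ln q) + ln q) by ring.
    rewrite exp_plus, exp_ln by lra. ring. }
  rewrite H1, H2. reflexivity.
Qed.

Lemma entropy_term_eq q l k : 1 < q -> 0 < l ->
  entropy_term (qLL q) l k = phi_integrand q (ln l - IZR k * ln q).
Proof.
  intros Hq Hl. unfold entropy_term. rewrite qLL_eq by auto. reflexivity.
Qed.

Lemma Derive_qLL q l k : 1 < q -> 0 < l ->
  Derive (fun m => qLL q m k) l =
  / l * (- (exp (ln l - IZR k * ln q) * exp (- exp (ln l - IZR k * ln q))) +
         q * exp (ln l - IZR k * ln q) * exp (- (q * exp (ln l - IZR k * ln q)))).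
Proof.
  intros Hq Hl.
  assert (HP1 : 0 < powerRZ q k) by (apply powerRZ_lt; lra).
  assert (HP2 : 0 < powerRZ q (k - 1)) by (apply powerRZ_lt; lra).
  set (t := ln l - IZR k * ln q).
  assert (E1 : exp t = l / powerRZ q k) by (unfold t; rewrite div_powerRZ; auto).
  assert (E2 : q * exp t = l / powerRZ q (k - 1)).
  { rewrite div_powerRZ by auto. rewrite minus_IZR. unfold t.
    replace (ln l - (IZR k - 1) * ln q) with ((ln l - IZR k * ln q) + ln q) by ring.
    rewrite exp_plus, exp_ln by lra. ring. }
  unfold qLL. set (P1 := powerRZ q k) in *. set (P2 := powerRZ q (k - 1)) in *.
  apply is_derive_unique.
  auto_derive; auto; try lra.
  rewrite E2, E1. replace (- (l / P1)) with (- l / P1) by (field; lra).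
  unfold Rdiv. replace (- (l * / P2)) with (- l * / P2) by ring. field. repeat split; lra.
Qed.

Lemma fisher_term_eq q l k : 1 < q -> 0 < l ->
  fisher_term (qLL q) l k = / l ^ 2 * rho_integrand q (ln l - IZR k * ln q).
Proof.
  intros Hq Hl. unfold fisher_term. rewrite Derive_qLL by auto. rewrite qLL_eq by auto.
  unfold rho_integrand. destruct (gq_facts q (ln l - IZR k * ln q) Hq) as [Hg _].
  unfold gq in *. field. split; lra.
Qed.

Lemma SeriesZ_TS (T : Z -> R) (F : R -> R) L x :
  (forall k, T k = F (x - IZR k * L)) -> SeriesZ T = TS F L x.
Proof.
  intros H. unfold SeriesZ, TS. f_equal; apply Series_ext; intros n; rewrite H; f_equal.
  - rewrite <- INR_IZR_INZ. reflexivity.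
  - rewrite opp_IZR, plus_IZR, <- INR_IZR_INZ. simpl IZR. ring.
Qed.

Lemma SeriesZ_scal (T : Z -> R) c (F : R -> R) L x :
  (forall k, T k = c * F (x - IZR k * L)) -> SeriesZ T = c * TS F L x.
Proof.
  intros H. unfold SeriesZ, TS. rewrite Rmult_plus_distr_l, <- !Series_scal_l.
  f_equal; apply Series_ext; intros n; rewrite H; f_equal; f_equal.
  - rewrite <- INR_IZR_INZ. reflexivity.
  - rewrite opp_IZR, plus_IZR, <- INR_IZR_INZ. simpl IZR. ring.
Qed.

Lemma exZ (T : Z -> R) c (F : R -> R) C L x : 0 < L -> good F C ->
  (forall k, T k = c * F (x - IZR k * L)) -> ex_seriesZ T.
Proof.
  intros HL HF H. split.
  - apply (ex_series_ext (fun n => scal c (F (x - INR n * L)))).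
    + intros n. rewrite H, scalR, <- INR_IZR_INZ. reflexivity.
    + apply (@ex_series_scal_l R_AbsRing R_NormedModule). apply (ex_neg F C); auto.
  - apply (ex_series_ext (fun n => scal c (F (x + (INR n + 1) * L)))).
    + intros n. rewrite H, scalR. f_equal; f_equal.
      rewrite opp_IZR, plus_IZR, <- INR_IZR_INZ. simpl IZR. ring.
    + apply (@ex_series_scal_l R_AbsRing R_NormedModule). apply (ex_pos F C); auto.
Qed.

Lemma entropy_eq q l : 1 < q -> 0 < l -> entropy (qLL q) l = TS (phi_integrand q) (ln q) (ln l).
Proof. intros. apply SeriesZ_TS. intros; apply entropy_term_eq; auto. Qed.

Lemma fisher_eq q l : 1 < q -> 0 < l ->
  fisher (qLL q) l = / l ^ 2 * TS (rho_integrand q) (ln q) (ln l).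
Proof. intros. apply SeriesZ_scal. intros; apply fisher_term_eq; auto. Qed.

Lemma ln_Rpower q r : 1 < q -> ln (Rpower q r) = r * ln q.
Proof. intros; unfold Rpower; apply ln_exp. Qed.

Theorem mainTheorem4 (q : R) (hq : 1 < q) :
  (* the entropy and Fisher-information series converge *)
  (forall l, 0 < l ->
     ex_seriesZ (entropy_term (qLL q) l) /\ ex_seriesZ (fisher_term (qLL q) l)) /\
  weakly_scale_invariant (qLL q) q /\
  (* the defining integrals exist *)
  ex_RInt (fun r => entropy (qLL q) (Rpower q r)) 0 1 /\
  ex_RInt (fun r => Rpower q (2 * r) * fisher (qLL q) (Rpower q r)) 0 1 /\
  ex_RInt_gen (phi_integrand q) (Rbar_locally m_infty) (Rbar_locally p_infty) /\
  ex_RInt_gen (rho_integrand q) (Rbar_locally m_infty) (Rbar_locally p_infty) /\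
  calH (qLL q) q = phi q / ln q /\
  calI (qLL q) q = rho q / ln q.
Proof.
  pose proof (lnq_pos q hq) as HL.
  pose proof (phi_good q hq) as Hf. pose proof (rho_good q hq) as Hh.
  destruct (main_gen _ _ _ HL Hf) as [Hf1 [Hf2 Hf3]].
  destruct (main_gen _ _ _ HL Hh) as [Hh1 [Hh2 Hh3]].
  assert (EH : forall r, entropy (qLL q) (Rpower q r) = TS (phi_integrand q) (ln q) (r * ln q)).
  { intros r. rewrite entropy_eq by (auto; apply exp_pos). rewrite ln_Rpower; auto. }
  assert (EI : forall r, Rpower q (2 * r) * fisher (qLL q) (Rpower q r) =
                         TS (rho_integrand q) (ln q) (r * ln q)).
  { intros r. rewrite fisher_eq by (auto; apply exp_pos). rewrite ln_Rpower by auto.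
    assert (Rpower q (2 * r) = Rpower q r ^ 2).
    { unfold Rpower. simpl. rewrite Rmult_1_r, <- exp_plus. f_equal; ring. }
    rewrite H. pose proof (exp_pos (r * ln q)). unfold Rpower. field. lra. }
  split; [|split; [|split; [|split; [|split; [|split; [|split]]]]]].
  - intros l Hl. split.
    + apply (exZ _ 1 (phi_integrand q) _ (ln q) (ln l) HL Hf).
      intros k; rewrite entropy_term_eq by auto; ring.
    + apply (exZ _ (/ l ^ 2) (rho_integrand q) _ (ln q) (ln l) HL Hh).
      intros k; rewrite fisher_term_eq by auto; ring.
  - intros l Hl. assert (Hql : 0 < q * l) by nra. split.
    + rewrite !entropy_eq by auto. rewrite ln_mult by lra.
      rewrite Rplus_comm, (TS_shift _ _ _ _ HL Hf). reflexivity.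
    + rewrite !fisher_eq by auto. rewrite ln_mult by lra.
      rewrite Rplus_comm, (TS_shift _ _ _ _ HL Hh). field. lra.
  - eapply ex_RInt_ext; [|exact Hf1]. intros x _. rewrite EH. reflexivity.
  - eapply ex_RInt_ext; [|exact Hh1]. intros x _. rewrite EI. reflexivity.
  - exact Hf2.
  - exact Hh2.
  - unfold calH, phi. rewrite <- Hf3. apply RInt_ext. intros x _. apply EH.
  - unfold calI, rho. rewrite <- Hh3. apply RInt_ext. intros x _. apply EI.
Qed.
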